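(* Let $0<\mu<\lambda_{\min}(A)$ and $\ell\ge1$, and assume that $R_0,\dots,R_{\ell-1}$ (from BCG) have full column rank ($R_\ell$ may be rank deficient, e.g. zero). Define recursively $\Upsilon^{(\mu)}_0=\mu^{-1}I_m$, $\Theta^{(\mu)}_j=(R_j^TR_j)\Upsilon^{(\mu)}_j$, and for $j=1,\dots,\ell$ $$\Upsilon^{(\mu)}_j=\big[\mu(\Theta^{(\mu)}_{j-1}-\Theta_{j-1})+R_j^TR_j\big]^{-1}(\Theta^{(\mu)}_{j-1}-\Theta_{j-1}).$$ Then these quantities are well defined, and for every $k=1,\dots,\ell$, $$\Theta^{(\mu)}_{k-1}-\mathfrak{E}_{k-1}=\sum_{j=k}^{\ell}B^{(\mu)}_j+\big(\Theta^{(\mu)}_\ell-\mathfrak{E}_\ell\big),\qquad B^{(\mu)}_j=(\Theta^{(\mu)}_{j-1}-\Theta_{j-1})-\Theta^{(\mu)}_j,$$ where each $B^{(\mu)}_j$, $j=1,\dots,\ell$, is symmetric positive definite. If moreover $R_\ell=0$, then $\Theta^{(\mu)}_{k-1}-\mathfrak{E}_{k-1}$ is symmetric positive definite for every $k=1,\dots,\ell$.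
   Context: Let $A\in\mathbb{R}^{n\times n}$ be symmetric positive definite, let $B,X_0\in\mathbb{R}^{n\times m}$, and let $X=A^{-1}B$. The block conjugate gradient (BCG) algorithm sets $R_0=B-AX_0$, $P_0=R_0$, and for $k=1,2,\dots$: $\Upsilon_{k-1}=(P_{k-1}^TAP_{k-1})^{-1}(R_{k-1}^TR_{k-1})$, $X_k=X_{k-1}+P_{k-1}\Upsilon_{k-1}$, $R_k=R_{k-1}-AP_{k-1}\Upsilon_{k-1}$, $\Xi_k=(R_{k-1}^TR_{k-1})^{-1}(R_k^TR_k)$, $P_k=R_k+P_{k-1}\Xi_k$. Define $\mathfrak{E}_k=(X-X_k)^TA(X-X_k)$ and $\Theta_k=(R_k^TR_k)\Upsilon_k$. $\lambda_{\min}(A)$ denotes the smallest eigenvalue of $A$. *)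

(* Defs.v *)
From HB Require Import structures.
From mathcomp Require Import all_boot all_order all_algebra.
From mathcomp Require Import reals.
Set Implicit Arguments. Unset Strict Implicit. Unset Printing Implicit Defensive.
Import Order.TTheory GRing.Theory Num.Theory.
Local Open Scope ring_scope.

Section BCG.
Variables (R : realType) (n m : nat).

Definition spd (k : nat) (M : 'M[R]_k) : Prop :=
  M^T = M /\ forall v : 'cV[R]_k, v != 0 -> 0 < (v^T *m M *m v) 0 0.

Definition lt_lambda_min (k : nat) (mu : R) (M : 'M[R]_k) : Prop :=
  forall a : R, eigenvalue M a -> mu < a.

Variables (A : 'M[R]_n) (B X0 : 'M[R]_(n, m)).

Fixpoint bcg_state (k : nat) : 'M[R]_(n, m) * 'M[R]_(n, m) * 'M[R]_(n, m) :=
  match k with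
  | 0 => (X0, B - A *m X0, B - A *m X0)
  | k'.+1 =>
      let: (X, Rk, P) := bcg_state k' in
      let Ups := invmx (P^T *m A *m P) *m (Rk^T *m Rk) in
      let X' := X + P *m Ups in
      let R' := Rk - A *m P *m Ups in
      let Xi := invmx (Rk^T *m Rk) *m (R'^T *m R') in
      (X', R', R' + P *m Xi)
  end.

Definition bcgX k := (bcg_state k).1.1.
Definition bcgR k := (bcg_state k).1.2.
Definition bcgP k := (bcg_state k).2.

Definition RtR k : 'M[R]_m := (bcgR k)^T *m bcgR k.

Definition Ups k : 'M[R]_m :=
  invmx ((bcgP k)^T *m A *m bcgP k) *m RtR k.
Definition Theta k : 'M[R]_m := RtR k *m Ups k.

Definition Xsol : 'M[R]_(n, m) := invmx A *m B.
Definition Err k : 'M[R]_m := (Xsol - bcgX k)^T *m A *m (Xsol - bcgX k).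

Variable mu : R.

Fixpoint Ups_mu (k : nat) : 'M[R]_m :=
  match k with
  | 0 => (mu^-1)%:M
  | k'.+1 =>
      let D := RtR k' *m Ups_mu k' - Theta k' in
      invmx (mu *: D + RtR k'.+1) *m D
  end.

Definition Theta_mu k : 'M[R]_m := RtR k *m Ups_mu k.

Definition Mmu j : 'M[R]_m := mu *: (Theta_mu j.-1 - Theta j.-1) + RtR j.

Definition Bmu j : 'M[R]_m := (Theta_mu j.-1 - Theta j.-1) - Theta_mu j.

End BCG.

(* Main.v *)
Require Import Defs.
From HB Require Import structures.
From mathcomp Require Import all_boot all_order all_algebra.
From mathcomp Require Import reals classical_sets.
From mathcomp Require Import ring lra.
Set Implicit Arguments. Unset Strict Implicit. Unset Printing Implicit Defensive.
Import Order.TTheory GRing.Theory Num.Theory.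
Local Open Scope ring_scope.

Section Lin.
Variable R : realType.

Definition psd (k : nat) (M : 'M[R]_k) : Prop :=
  M^T = M /\ forall v : 'cV[R]_k, 0 <= (v^T *m M *m v) 0 0.

Lemma cV_norm_gt0 k (v : 'cV[R]_k) : v != 0 -> 0 < (v^T *m v) 0 0.
Proof.
move=> nz; have [i vi] : exists i, v i 0 != 0.
  apply/existsP; apply: contraR nz; rewrite negb_exists => /forallP H.
  by apply/eqP/matrixP => a b; rewrite mxE (ord1 b); apply/eqP; move: (H a); rewrite negbK.
rewrite mxE (bigD1 i) //= mxE ltr_pwDl //; first by rewrite lt0r mulf_neq0 //= -expr2 sqr_ge0.
by apply: sumr_ge0 => j _; rewrite mxE -expr2 sqr_ge0.
Qed.

Lemma qf_congr k p (M : 'M[R]_k) (C : 'M[R]_(k, p)) (v : 'cV[R]_p) :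
  v^T *m (C^T *m M *m C) *m v = (C *m v)^T *m M *m (C *m v).
Proof. by rewrite trmx_mul !mulmxA. Qed.

Lemma spd_unit k (M : 'M[R]_k) : spd M -> M \in unitmx.
Proof.
case=> sM pM; rewrite -row_free_unit; apply: inj_row_free => w wM.
apply/eqP; apply/negPn/negP => nz.
have nz' : w^T != 0 by apply: contra nz => /eqP h; rewrite -[w]trmxK h trmx0.
by move: (pM _ nz'); rewrite trmxK wM mul0mx mxE ltxx.
Qed.

Lemma spd_congr k p (M : 'M[R]_k) (C : 'M[R]_(k, p)) :
  spd M -> (forall v : 'cV[R]_p, C *m v = 0 -> v = 0) -> spd (C^T *m M *m C).
Proof.
case=> sM pM inj; split; first by rewrite !trmx_mul trmxK sM mulmxA.
move=> v nz; rewrite qf_congr; apply: pM; apply: contra nz => /eqP h.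
by rewrite (inj _ h).
Qed.

Lemma psd_congr k p (M : 'M[R]_k) (C : 'M[R]_(k, p)) :
  psd M -> psd (C^T *m M *m C).
Proof.
case=> sM pM; split; first by rewrite !trmx_mul trmxK sM mulmxA.
by move=> v; rewrite qf_congr.
Qed.

Lemma spd_psd k (M : 'M[R]_k) : spd M -> psd M.
Proof.
case=> sM pM; split=> // v; have [->|nz] := eqVneq v 0.
  by rewrite mulmx0 mxE.
exact/ltW/pM.
Qed.

Lemma spd_add_psd k (M N : 'M[R]_k) : spd M -> psd N -> spd (M + N).
Proof.
case=> sM pM [sN pN]; split; first by rewrite linearD /= sM sN.
move=> v nz; rewrite mulmxDr mulmxDl mxE; have := pM v nz; have := pN v; lra.
Qed.

Lemma psd_add k (M N : 'M[R]_k) : psd M -> psd N -> psd (M + N).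
Proof.
case=> sM pM [sN pN]; split; first by rewrite linearD /= sM sN.
by move=> v; rewrite mulmxDr mulmxDl mxE addr_ge0.
Qed.

Lemma spd_scale k (a : R) (M : 'M[R]_k) : 0 < a -> spd M -> spd (a *: M).
Proof.
move=> a0 [sM pM]; split; first by rewrite linearZ /= sM.
by move=> v nz; rewrite -scalemxAr -scalemxAl mxE mulr_gt0 // pM.
Qed.

Lemma psd_scale k (a : R) (M : 'M[R]_k) : 0 <= a -> psd M -> psd (a *: M).
Proof.
move=> a0 [sM pM]; split; first by rewrite linearZ /= sM.
by move=> v; rewrite -scalemxAr -scalemxAl mxE mulr_ge0 // pM.
Qed.

Lemma spd1 k : spd (1%:M : 'M[R]_k).
Proof. by split; [rewrite trmx1 | move=> v nz; rewrite mulmx1 cV_norm_gt0]. Qed.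

Lemma psd_gram k p (C : 'M[R]_(k, p)) : psd (C^T *m C).
Proof. by rewrite -[C^T]mulmx1; apply/psd_congr/spd_psd/spd1. Qed.

Lemma spd_gram k p (C : 'M[R]_(k, p)) :
  (forall v : 'cV[R]_p, C *m v = 0 -> v = 0) -> spd (C^T *m C).
Proof. by move=> inj; rewrite -[C^T]mulmx1; apply/spd_congr=> //; apply: spd1. Qed.

Lemma invmx_uniq k (X Y : 'M[R]_k) : X *m Y = 1%:M -> invmx X = Y.
Proof.
move=> h; have [uX uY] := mulmx1_unit h.
by rewrite -[invmx X]mulmx1 -h mulmxA mulVmx // mul1mx.
Qed.

Lemma unit_inj k (M : 'M[R]_k) p (v : 'M[R]_(k, p)) : M \in unitmx -> M *m v = 0 -> v = 0.
Proof. by move=> u h; rewrite -(mulKmx u v) h mulmx0. Qed.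

Lemma spd_inv k (M : 'M[R]_k) : spd M -> spd (invmx M).
Proof.
move=> hM; have u := spd_unit hM; have [sM _] := hM.
have -> : invmx M = (invmx M)^T *m M *m invmx M.
  by rewrite trmx_inv sM -mulmxA mulmxV // mulmx1.
by apply: spd_congr => // v; apply: unit_inj; rewrite unitmx_inv.
Qed.

Lemma spd_sym k (M : 'M[R]_k) : spd M -> M^T = M. Proof. by case. Qed.
Lemma psd_sym k (M : 'M[R]_k) : psd M -> M^T = M. Proof. by case. Qed.

End Lin.

Section Lam.
Variable R : realType.

Lemma qf_shift k (M : 'M[R]_k) (a : R) (x : 'cV[R]_k) :
  (x^T *m (M - a%:M) *m x) 0 0 = (x^T *m M *m x) 0 0 - a * (x^T *m x) 0 0.
Proof.
by rewrite mulmxBr mulmxBl mul_mx_scalar -scalemxAl !mxE.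
Qed.

Lemma quad_bound k (N : 'M[R]_k) (x : 'cV[R]_k) :
  (x^T *m N *m x) 0 0 <= (\sum_i \sum_j `|N j i|) * (x^T *m x) 0 0.
Proof.
set s := (x^T *m x) 0 0.
have hs : forall i, (x i 0)^+2 <= s.
  move=> i; rewrite /s mxE (bigD1 i) //= mxE -expr2 lerDl.
  by apply: sumr_ge0 => j _; rewrite mxE -expr2 sqr_ge0.
have hxy : forall i j, `|x i 0 * x j 0| <= s.
  move=> i j; have := hs i; have := hs j; rewrite normrM.
  have := sqr_ge0 (`|x i 0| - `|x j 0|).
  rewrite -!(real_normK (num_real (x _ 0))) => h1 h2 h3.
  have := normr_ge0 (x i 0); have := normr_ge0 (x j 0). nra.
rewrite mxE big_distrl /=; apply: ler_sum => i _.
rewrite mxE !big_distrl /=; apply: ler_sum => j _.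
rewrite !mxE.
apply: (le_trans (ler_norm _)); rewrite !normrM.
have := hxy i j; rewrite normrM => h.
have := normr_ge0 (N j i); have := normr_ge0 (x i 0); have := normr_ge0 (x j 0).
nra.
Qed.

Lemma qf_comb k (M N : 'M[R]_k) (x : 'cV[R]_k) (t : R) :
  N^T = N -> M *m N = 1%:M -> N *m M = 1%:M ->
  (x - t *: (N *m x))^T *m M *m (x - t *: (N *m x)) =
  x^T *m M *m x - (2 * t) *: (x^T *m x) + (t ^+ 2) *: (x^T *m N *m x).
Proof.
move=> sN MN NM.
have -> : (x - t *: (N *m x))^T = x^T - t *: (x^T *m N).
  by rewrite linearB /= linearZ /= trmx_mul sN.
rewrite !mulmxBl !mulmxBr -?scalemxAl -?scalemxAr -?scalemxAl.
have e1 : x^T *m M *m (N *m x) = x^T *m x by rewrite mulmxA -[x^T *m M *m N]mulmxA MN mulmx1.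
have e2 : x^T *m N *m M *m x = x^T *m x by rewrite -[x^T *m N *m M]mulmxA NM mulmx1.
have e3 : x^T *m N *m M *m (N *m x) = x^T *m N *m x
  by rewrite -[x^T *m N *m M]mulmxA NM mulmx1 mulmxA.
rewrite e1 e2 e3; apply/matrixP => i j; rewrite !mxE; ring.
Qed.

Lemma lambda_spd n (A : 'M[R]_n) (mu : R) :
  spd A -> lt_lambda_min mu A -> spd (A - mu%:M).
Proof.
move=> [sA pA] hlam; split; first by rewrite linearB /= sA tr_scalar_mx.
move=> v vnz.
pose E : set R := fun r => exists2 x : 'cV[R]_n, x != 0 &
   r = (x^T *m A *m x) 0 0 / (x^T *m x) 0 0.
have Ene : nonempty E by exists ((v^T *m A *m v) 0 0 / (v^T *m v) 0 0); exists v.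
have Elb : has_lbound E.
  exists 0 => r [x xnz ->]; apply: divr_ge0; [exact/ltW/pA | exact/ltW/cV_norm_gt0].
set lam := inf E.
have Hl : forall x : 'cV[R]_n, x != 0 ->
   lam * (x^T *m x) 0 0 <= (x^T *m A *m x) 0 0.
  move=> x xnz; have := ge_inf Elb; move=> /(_ _ (ex_intro2 _ _ x xnz erefl)).
  have := cV_norm_gt0 xnz; move=> h; rewrite ler_pdivlMr //.
have psdM : forall x : 'cV[R]_n, 0 <= (x^T *m (A - lam%:M) *m x) 0 0.
  move=> x; have [->|xnz] := eqVneq x 0; first by rewrite mulmx0 mxE.
  by rewrite qf_shift subr_ge0 Hl.
have sM : (A - lam%:M)^T = A - lam%:M by rewrite linearB /= sA tr_scalar_mx.
have nu : (A - lam%:M) \notin unitmx.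
  apply/negP => uM; set M := A - lam%:M in uM sM psdM.
  set N := invmx M.
  have sN : N^T = N by rewrite /N trmx_inv sM.
  set K := \sum_i \sum_j `|N j i|.
  have K0 : 0 <= K by apply: sumr_ge0 => i _; apply: sumr_ge0 => j _.
  have key : forall x : 'cV[R]_n, x != 0 ->
      (x^T *m x) 0 0 / (K + 1) <= (x^T *m M *m x) 0 0.
    move=> x xnz; set t := (K + 1)^-1.
    have t0 : 0 < t by rewrite invr_gt0; lra.
    have tK : t * (K + 1) = 1 by rewrite mulVf //; apply/eqP; lra.
    have := psdM (x - t *: (N *m x)).
    rewrite qf_comb //; [|exact: mulmxV|exact: mulVmx].
    have := quad_bound N x; rewrite -/K.
    have := cV_norm_gt0 xnz.
    move: (x^T *m M *m x) (x^T *m x) (x^T *m N *m x) => P Q S.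
    rewrite !mxE.
    move: (P 0 0) (Q 0 0) (S 0 0) => a b c hb hc ha.
    have h1 : t ^+ 2 * c <= t ^+ 2 * (K * b) by rewrite ler_wpM2l // sqr_ge0.
    have h2 : t * K = 1 - t by rewrite -tK; ring.
    have h3 : t ^+ 2 * (K * b) = t * b - t ^+ 2 * b.
      by rewrite expr2 -mulrA (mulrA t K) h2; ring.
    have h4 : 0 <= t ^+ 2 * b by rewrite mulr_ge0 ?sqr_ge0 // ltW.
    have h5 : (2 * t) * b = 2 * (t * b) by ring.
    rewrite mulrC; move: ha; rewrite h5; lra.
  have K1 : 0 < (K + 1)^-1 by rewrite invr_gt0; lra.
  have : lam + (K + 1)^-1 <= lam.
    apply: lb_le_inf => // r [x xnz ->].
    have hx := cV_norm_gt0 xnz.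
    have := key x xnz; have := Hl x xnz.
    rewrite /M qf_shift ler_pdivlMr //.
    move: ((x^T *m x) 0 0) ((x^T *m A *m x) 0 0) hx => b a hb h1.
    rewrite ler_pdivrMr; last by lra.
    move=> h2; have hu : (K + 1)^-1 * (K + 1) = 1 by rewrite mulVf //; apply/eqP; lra.
    have := ler_wpM2l (ltW K1) h2.
    rewrite mulrCA hu mulr1.
    move: ((K + 1)^-1) => u h3; nra.
  lra.
have := hlam lam; rewrite /eigenvalue /eigenspace kermx_eq0 row_free_unit => /(_ nu) ml.
have := psdM v; have := cV_norm_gt0 vnz; rewrite !qf_shift.
move: ((v^T *m v) 0 0) ((v^T *m A *m v) 0 0) => b a hb h.
nra.
Qed.

End Lam.

Section Bcg.
Variables (R : realType) (n m : nat) (A : 'M[R]_n) (B X0 : 'M[R]_(n, m)).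

Local Notation Rk := (bcgR A B X0).
Local Notation Pk := (bcgP A B X0).
Local Notation Xk := (bcgX A B X0).
Local Notation S := (RtR A B X0).
Local Notation Pi k := ((Pk k)^T *m A *m Pk k).
Local Notation Xi k := (invmx (S k) *m S k.+1).

Lemma bcgR_S k : Rk k.+1 = Rk k - A *m Pk k *m Ups A B X0 k.
Proof. by rewrite /Ups /RtR /bcgR /bcgP /=; case: (bcg_state A B X0 k) => [[X Q] P]. Qed.
Lemma bcgX_S k : Xk k.+1 = Xk k + Pk k *m Ups A B X0 k.
Proof. by rewrite /Ups /RtR /bcgX /bcgR /bcgP /=; case: (bcg_state A B X0 k) => [[X Q] P]. Qed.
Lemma bcgP_S k : Pk k.+1 = Rk k.+1 + Pk k *m Xi k.
Proof. by rewrite /RtR /bcgR /bcgP /=; case: (bcg_state A B X0 k) => [[X Q] P]. Qed.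
Lemma UpsE k : Ups A B X0 k = invmx (Pi k) *m S k. Proof. by []. Qed.
Lemma ThetaE k : Theta A B X0 k = S k *m (invmx (Pi k) *m S k). Proof. by []. Qed.
Lemma bcgP0 : Pk 0 = Rk 0. Proof. by []. Qed.
Lemma bcgR0 : Rk 0 = B - A *m X0. Proof. by []. Qed.
Lemma bcgX0 : Xk 0 = X0. Proof. by []. Qed.

Lemma bcgR_res k : Rk k = B - A *m Xk k.
Proof.
elim: k => [//|k IH]; rewrite bcgR_S bcgX_S IH mulmxDr mulmxA; by rewrite opprD addrA.
Qed.

Lemma R_as_P k : Rk k.+1 = Pk k.+1 - Pk k *m Xi k.
Proof. by rewrite bcgP_S addrK. Qed.

Lemma Rt_of_P i p (x : 'M[R]_(n, p)) :
  (forall i', (i' <= i)%N -> (Pk i')^T *m x = 0) -> (Rk i)^T *m x = 0.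
Proof.
case: i => [|i] H; first by rewrite -bcgP0 H.
rewrite R_as_P linearB /= trmx_mul mulmxBl -mulmxA !H // ?mulmx0 ?subr0 //.
Qed.

Lemma Pt_of_R i p (x : 'M[R]_(n, p)) :
  (forall i', (i' <= i)%N -> (Rk i')^T *m x = 0) -> (Pk i)^T *m x = 0.
Proof.
elim: i => [|i IH] H; first by rewrite bcgP0 H.
rewrite bcgP_S linearD /= trmx_mul mulmxDl -mulmxA IH ?H ?mulmx0 ?addr0 //.
by move=> i' hi'; apply: H; apply: leqW.
Qed.

Hypothesis sA : A^T = A.
Hypothesis pA : spd A.
Variable l : nat.
Hypothesis hS : forall i, (i < l)%N -> spd (S i).

Lemma S_sym k : (S k)^T = S k.
Proof. by rewrite /RtR trmx_mul trmxK. Qed.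
Lemma S_unit k : (k < l)%N -> S k \in unitmx.
Proof. by move=> h; apply/spd_unit/hS. Qed.
Lemma Pi_sym k : (Pi k)^T = Pi k.
Proof. by rewrite !trmx_mul trmxK sA mulmxA. Qed.

Definition Orth k := forall i j, (i < j)%N -> (j <= k)%N ->
  (Rk i)^T *m Rk j = 0 /\ (Pk i)^T *m A *m Pk j = 0 /\ (Pk i)^T *m Rk j = 0.

Lemma Orth_le k k' : (k' <= k)%N -> Orth k -> Orth k'.
Proof. by move=> le O i j ij jk; apply: O => //; apply: leq_trans le. Qed.

Lemma PtR_diag k : Orth k -> (Pk k)^T *m Rk k = S k.
Proof.
case: k => [|k] O; first by rewrite bcgP0.
rewrite bcgP_S linearD /= mulmxDl trmx_mul -mulmxA.
by have [_ [_ ->]] := O k k.+1 (ltnSn k) (leqnn _); rewrite mulmx0 addr0.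
Qed.

Lemma RtP_diag k : Orth k -> (Rk k)^T *m Pk k = S k.
Proof. by move=> O; rewrite -[LHS]trmxK trmx_mul trmxK PtR_diag // S_sym. Qed.

Lemma P_inj k : (k < l)%N -> Orth k -> forall v : 'cV[R]_m, Pk k *m v = 0 -> v = 0.
Proof.
move=> kl O v h; apply: (unit_inj (S_unit kl)).
by rewrite -(RtP_diag O) -mulmxA h mulmx0.
Qed.

Lemma Pi_spd k : (k < l)%N -> Orth k -> spd (Pi k).
Proof. by move=> kl O; apply: spd_congr => //; apply: P_inj. Qed.

Lemma Pi_unit k : (k < l)%N -> Orth k -> Pi k \in unitmx.
Proof. by move=> kl O; apply/spd_unit/Pi_spd. Qed.

Lemma AP k : (k < l)%N -> Orth k ->
  A *m Pk k = (Rk k - Rk k.+1) *m invmx (S k) *m Pi k.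
Proof.
move=> kl O; rewrite bcgR_S opprB addrC subrK UpsE.
have us := S_unit kl; have up := Pi_unit kl O.
move: (S k) (Pi k) us up => s p us up.
by rewrite -!mulmxA mulKVmx // mulVmx ?mulmx1.
Qed.

Lemma PtA k : (k < l)%N -> Orth k ->
  (Pk k)^T *m A = Pi k *m invmx (S k) *m (Rk k - Rk k.+1)^T.
Proof.
move=> kl O; have h : (Pk k)^T *m A = (A *m Pk k)^T by rewrite trmx_mul sA.
rewrite {1}h.
rewrite AP // trmx_mul Pi_sym trmx_mul trmx_inv S_sym.
by rewrite mulmxA.
Qed.

Lemma RtAP_diag k : Orth k -> (Rk k)^T *m A *m Pk k = Pi k.
Proof.
case: k => [|k] O; first by rewrite bcgP0.
rewrite R_as_P linearB /= mulmxBl mulmxBl trmx_mul -!mulmxA.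
have [_ [h _]] := O k k.+1 (ltnSn k) (leqnn _).
by rewrite [(Pk k)^T *m (A *m _)]mulmxA h mulmx0 subr0.
Qed.

Lemma Orth_S k : (k.+1 < l)%N -> Orth k -> Orth k.+1.
Proof.
move=> kl O.
have kl' : (k < l)%N by apply: ltn_trans kl.
have ha : forall i, (i <= k)%N -> (Rk i)^T *m Rk k.+1 = 0.
  move=> i ik; rewrite bcgR_S mulmxBr.
  case: (ltngtP i k) ik => // [ik _|-> _].
    have [-> _] := O i k ik (leqnn _).
    rewrite -!mulmxA (Rt_of_P (x := A *m (Pk k *m Ups A B X0 k))) ?subr0 //.
    move=> i' hi'; have [_ [h _]] := O i' k (leq_ltn_trans hi' ik) (leqnn _).
    by rewrite !mulmxA h !mul0mx.
  rewrite !mulmxA RtAP_diag // mulmxV ?mul1mx ?subrr //; exact: Pi_unit.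
have hb : forall i, (i <= k)%N -> (Pk i)^T *m A *m Pk k.+1 = 0.
  move=> i ik; have Oi := Orth_le ik O; have il : (i < l)%N := leq_ltn_trans ik kl'.
  rewrite bcgP_S mulmxDr.
  case: (ltngtP i k) ik => // [ik _|-> _].
    have e1 : (Rk i - Rk i.+1)^T *m Rk k.+1 = 0.
      by rewrite linearB /= mulmxBl !ha ?subrr // ltnW.
    have h := (O i k ik (leqnn _)).2.1.
    rewrite [X in _ + X]mulmxA h mul0mx addr0 PtA // -mulmxA e1 mulmx0 //.
  have e3 : (Rk k - Rk k.+1)^T *m Rk k.+1 = - S k.+1.
    by rewrite linearB /= mulmxBl ha // sub0r.
  rewrite [X in _ + X]mulmxA [in X in X + _]PtA // -[X in X + _]mulmxA e3 mulmxN.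
  by rewrite [X in _ + X]mulmxA addNr.
move=> i j ij; rewrite leq_eqVlt => /orP [/eqP ej|jk]; last by apply: O.
subst j.
have ik : (i <= k)%N by [].
split; first exact: (ha i ik).
split; first exact: (hb i ik).
by apply: Pt_of_R => i' hi'; apply: ha; apply: leq_trans hi' _.
Qed.

Lemma Orth_all k : (k < l)%N -> Orth k.
Proof.
elim: k => [_|k IH kl]; first by move=> i j ij j0; move: (leq_trans ij j0).
by apply: Orth_S => //; apply: IH; apply: ltn_trans kl.
Qed.

Lemma RR_orth i j : (i < j)%N -> (j < l)%N -> (Rk i)^T *m Rk j = 0.
Proof. by move=> ij jl; have [] := Orth_all jl ij (leqnn _). Qed.

Lemma PAP_orth i j : (i < j)%N -> (j < l)%N -> (Pk i)^T *m A *m Pk j = 0.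
Proof. by move=> ij jl; have [_ []] := Orth_all jl ij (leqnn _). Qed.

Lemma PR_orth i j : (i < j)%N -> (j < l)%N -> (Pk i)^T *m Rk j = 0.
Proof. by move=> ij jl; have [_ []] := Orth_all jl ij (leqnn _). Qed.

Lemma PAP_orth' i j : (i < j)%N -> (j < l)%N -> (Pk j)^T *m A *m Pk i = 0.
Proof.
move=> ij jl; have := PAP_orth ij jl; move/(congr1 trmx).
by rewrite !trmx_mul trmxK sA trmx0 mulmxA.
Qed.

Lemma PAR_far i j : (i.+1 < j)%N -> (j < l)%N -> (Pk i)^T *m A *m Rk j = 0.
Proof.
move=> ij jl; have il : (i < l)%N by apply: ltn_trans jl; apply: ltn_trans ij.
rewrite PtA //; last exact: Orth_all.
rewrite -mulmxA linearB /= mulmxBl !RR_orth ?subrr ?mulmx0 //.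
exact: ltn_trans ij.
Qed.

Lemma PAR_next j : (j.+1 < l)%N ->
  (Pk j)^T *m A *m Rk j.+1 = - (Pi j *m invmx (S j) *m S j.+1).
Proof.
move=> jl; have il : (j < l)%N by apply: ltn_trans jl.
rewrite [in LHS]PtA //; last exact: Orth_all.
rewrite -mulmxA linearB /= mulmxBl RR_orth // sub0r.
by rewrite mulmxN.
Qed.

Lemma RAR_far i j : (i.+1 < j)%N -> (j < l)%N -> (Rk i)^T *m A *m Rk j = 0.
Proof.
move=> ij jl; rewrite -mulmxA; apply: Rt_of_P => i' hi'.
by rewrite mulmxA PAR_far //; apply: leq_ltn_trans ij.
Qed.

Lemma RAR_next j : (j.+1 < l)%N ->
  (Rk j)^T *m A *m Rk j.+1 = - (Pi j *m invmx (S j) *m S j.+1).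
Proof.
case: j => [|j] jl; first by rewrite -PAR_next.
rewrite R_as_P linearB /= !mulmxBl PAR_next // trmx_mul -!mulmxA.
rewrite [(Pk j)^T *m (A *m _)]mulmxA PAR_far ?mulmx0 ?subr0 //.
Qed.

Lemma Xi_tr k : (Xi k)^T = S k.+1 *m invmx (S k).
Proof. by rewrite trmx_mul trmx_inv !S_sym. Qed.

Lemma RAR_diag j : (j.+1 < l)%N ->
  (Rk j.+1)^T *m A *m Rk j.+1 = Pi j.+1 + (Xi j)^T *m Pi j *m Xi j.
Proof.
move=> jl; have h1 := PAP_orth (ltnSn j) jl.
have h2 := PAP_orth' (ltnSn j) jl.
rewrite R_as_P.
move: (Pk j.+1) (Pk j) (Xi j) h1 h2 => P' P X h1 h2.
have -> : (P' - P *m X)^T = P'^T - X^T *m P^T by rewrite linearB /= trmx_mul.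
have h1' (Y : 'M[R]_m) : Y *m P^T *m A *m P' = 0.
  have -> : Y *m P^T *m A *m P' = Y *m (P^T *m A *m P') by rewrite !mulmxA.
  by rewrite h1 mulmx0.
by rewrite !mulmxBl !mulmxBr !mulmxA h1' h2 mul0mx subr0 sub0r opprK.
Qed.

Hypothesis uA : A \in unitmx.

Lemma Err_res k : Err A B X0 k = (Rk k)^T *m invmx A *m Rk k.
Proof.
rewrite /Err /Xsol bcgR_res.
have -> : invmx A *m B - Xk k = invmx A *m (B - A *m Xk k).
  by rewrite mulmxBr mulKmx.
rewrite trmx_mul trmx_inv sA -!mulmxA; congr (_ *m _).
by rewrite [A *m (invmx A *m _)]mulmxA mulmxV // mul1mx.
Qed.

Lemma Err_step k : (k < l)%N -> Err A B X0 k - Err A B X0 k.+1 = Theta A B X0 k.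
Proof.
move=> kl; have O := Orth_all kl.
rewrite !Err_res bcgR_S ThetaE UpsE.
have h1 := PtR_diag O; have h2 := RtP_diag O.
have hp := Pi_sym k; have up := Pi_unit kl O.
have hs := S_sym k.
move: (Pk k) (Rk k) (S k) h1 h2 hp up hs => P Q s h1 h2 hp up hs.
move: hp up; set p := P^T *m A *m P => hp up.
have hU : (invmx p *m s)^T = s *m invmx p by rewrite trmx_mul trmx_inv hp hs.
move: hU; move hUd : (invmx p *m s) => U hU.
have -> : (Q - A *m P *m U)^T = Q^T - U^T *m P^T *m A.
  by rewrite linearB /= !trmx_mul sA mulmxA.
have eA (q : nat) (Y : 'M[R]_(q, n)) : Y *m invmx A *m A = Y.
  by rewrite -mulmxA mulVmx // mulmx1.
have eA' (q : nat) (Y : 'M[R]_(q, n)) : Y *m A *m invmx A = Y.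
  by rewrite -mulmxA mulmxV // mulmx1.
have h1' (Y : 'M[R]_m) : Y *m P^T *m Q = Y *m s by rewrite -mulmxA h1.
rewrite !mulmxBl !mulmxBr !mulmxA !eA !eA' h2 h1' hU.
have ep (Y : 'M[R]_m) : Y *m invmx p *m P^T *m A *m P = Y.
  have -> : Y *m invmx p *m P^T *m A *m P = Y *m invmx p *m p by rewrite /p !mulmxA.
  by rewrite mulmxKV.
rewrite ep -hUd mulmxA.
move: (Q^T *m invmx A *m Q) (s *m invmx p *m s) => a b.
by apply/matrixP => i j; rewrite !mxE; ring.
Qed.

End Bcg.

Section Alg.
Variable R : realType.
Variable m : nat.
Implicit Types K Z D S P M : 'M[R]_m.

Lemma alg_core P Z : Z \in unitmx ->
  P *m invmx Z *m P - P = (P - Z) + (P - Z) *m invmx Z *m (P - Z).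
Proof.
move=> uZ.
rewrite !mulmxBl !mulmxBr mulmxV // !mul1mx mulmxKV //.
move: (P *m invmx Z *m P) => W; apply/matrixP=> i j; rewrite !mxE; ring.
Qed.

Lemma inv_diff P Z : (P - Z) \in unitmx -> Z \in unitmx -> P \in unitmx ->
  invmx (P - Z) - invmx P = invmx ((P - Z) + (P - Z) *m invmx Z *m (P - Z)).
Proof.
move=> uK uZ uP.
have eK : (P - Z) *m invmx Z *m P = (P - Z) + (P - Z) *m invmx Z *m (P - Z).
  have -> : (P - Z) *m invmx Z *m P = (P - Z) *m invmx Z *m ((P - Z) + Z) by rewrite subrK.
  by rewrite mulmxDr mulmxKV // addrC.
move: uK eK; move: (P - Z) => K uK eK.
symmetry; apply: invmx_uniq.
have e2 : (K + K *m invmx Z *m K) *m invmx P = K *m invmx Z by rewrite -eK mulmxK.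
by rewrite mulmxBr e2 mulmxDl mulmxV // mulmxK // addrK.
Qed.

Lemma spd_M K Z : spd K -> spd Z -> spd (K + K *m invmx Z *m K).
Proof.
move=> hK hZ; apply: spd_add_psd => //.
rewrite -{1}(spd_sym hK); apply: psd_congr; apply: spd_psd; exact: spd_inv.
Qed.

Lemma theta_step D (S' : 'M[R]_m) (mu : R) : 0 < mu -> spd D -> spd S' ->
  S' *m (invmx (mu *: D + S') *m D) =
  S' *m invmx (mu *: S' + S' *m invmx D *m S') *m S'.
Proof.
move=> mu0 hD hS.
have uW : mu *: D + S' \in unitmx.
  by apply: spd_unit; apply: spd_add_psd; [exact: spd_scale | exact: spd_psd].
have uD := spd_unit hD; have uS := spd_unit hS.
have eX : mu *: S' + S' *m invmx D *m S' = S' *m invmx D *m (mu *: D + S').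
  by rewrite mulmxDr -scalemxAr mulmxKV.
rewrite eX.
have -> : invmx (S' *m invmx D *m (mu *: D + S')) = invmx (mu *: D + S') *m D *m invmx S'.
  apply: invmx_uniq.
  rewrite -!mulmxA [(mu *: D + S') *m (invmx _ *m _)]mulmxA mulmxV // mul1mx.
  by rewrite [invmx D *m (D *m _)]mulmxA mulVmx // mul1mx mulmxV.
by rewrite -mulmxA mulmxKV.
Qed.

Lemma bmu_spd D S (mu : R) : 0 < mu -> spd D -> psd S ->
  spd (D - S *m (invmx (mu *: D + S) *m D)).
Proof.
move=> mu0 hD hS.
have hW : spd (mu *: D + S) by apply: spd_add_psd => //; exact: spd_scale.
have uW := spd_unit hW; have uD := spd_unit hD.
have -> : D - S *m (invmx (mu *: D + S) *m D) = mu *: (D *m invmx (mu *: D + S) *m D).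
  move: uW; set W := mu *: D + S => uW.
  have eS : S = W - mu *: D by rewrite /W addrC addKr.
  rewrite {1}eS mulmxBl [W *m _]mulmxA mulmxV // mul1mx -scalemxAl mulmxA.
  by rewrite opprB addrC subrK.
apply: spd_scale => //.
rewrite -{1}(spd_sym hD); apply: spd_congr; first exact: spd_inv.
by move=> v; apply: unit_inj.
Qed.

Lemma zk (P Z S S' : 'M[R]_m) (mu : R) :
  P^T = P -> S^T = S -> S'^T = S' -> Z \in unitmx -> S \in unitmx ->
  mu *: S' - (invmx S *m S')^T *m P *m (invmx S *m S')
    + (- (P *m invmx S *m S'))^T *m invmx Z *m (- (P *m invmx S *m S')) =
  mu *: S' + S' *m (invmx S *m ((P - Z) + (P - Z) *m invmx Z *m (P - Z)) *m invmx S) *m S'.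
Proof.
move=> sP sS sS' uZ uS.
have trN (p q : nat) (X : 'M[R]_(p, q)) : (- X)^T = - X^T by rewrite linearN.
rewrite -alg_core // trN mulNmx mulNmx mulmxN opprK !trmx_mul trmx_inv sP sS sS'.
rewrite !mulmxA !mulmxBr !mulmxBl !mulmxA.
move: (S' *m invmx S *m P *m invmx S *m S') (S' *m invmx S *m P *m invmx Z *m P *m invmx S *m S') => a b.
by apply/matrixP => i j; rewrite !mxE; ring.
Qed.

Lemma dform (P Z S : 'M[R]_m) :
  (P - Z) \in unitmx -> Z \in unitmx -> P \in unitmx ->
  S *m invmx (P - Z) *m S - S *m (invmx P *m S) =
  S *m invmx ((P - Z) + (P - Z) *m invmx Z *m (P - Z)) *m S.
Proof.
move=> uK uZ uP; rewrite mulmxA -mulmxBl -mulmxBr inv_diff //.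
Qed.

Lemma inv_sandwich (M S : 'M[R]_m) : M \in unitmx -> S \in unitmx ->
  invmx (S *m invmx M *m S) = invmx S *m M *m invmx S.
Proof.
move=> uM uS; apply: invmx_uniq.
rewrite -!mulmxA [S *m (invmx S *m _)]mulmxA mulmxV // mul1mx.
by rewrite [invmx M *m (M *m _)]mulmxA mulVmx // mul1mx mulmxV.
Qed.

End Alg.

Section Main.
Variables (R : realType) (n m : nat) (A : 'M[R]_n) (B X0 : 'M[R]_(n, m)) (mu : R).

Local Notation Rk := (bcgR A B X0).
Local Notation Pk := (bcgP A B X0).
Local Notation S := (RtR A B X0).
Local Notation Pi k := ((Pk k)^T *m A *m Pk k).
Local Notation Xi k := (invmx (S k) *m S k.+1).
Local Notation Q := (A - mu%:M).

Fixpoint Yv (k : nat) : 'M[R]_(n, m) :=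
  match k with
  | 0 => Rk 0
  | k'.+1 => let Y := Yv k' in
     Rk k'.+1 - Y *m invmx (Y^T *m Q *m Y) *m (Y^T *m Q *m Rk k'.+1)
  end.

Definition Zm k := (Yv k)^T *m Q *m Yv k.

Lemma YvS k : Yv k.+1 = Rk k.+1 - Yv k *m invmx (Zm k) *m ((Yv k)^T *m Q *m Rk k.+1).
Proof. by []. Qed.

Hypothesis sA : A^T = A.
Hypothesis pA : spd A.
Hypothesis uA : A \in unitmx.
Variable l : nat.
Hypothesis hS : forall i, (i < l)%N -> spd (S i).
Hypothesis pQ : spd Q.

Lemma Q_sym : Q^T = Q.
Proof. by rewrite linearB /= sA tr_scalar_mx. Qed.

Lemma Y_R j i : (j < i)%N -> (i < l)%N -> (Yv j)^T *m Rk i = 0.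
Proof.
elim: j i => [|j IH] i ji il; first exact: (RR_orth sA pA hS).
rewrite YvS linearB /= mulmxBl (RR_orth sA pA hS) // !trmx_mul -!mulmxA.
by rewrite IH ?mulmx0 ?subrr // ltnW.
Qed.

Lemma Y_AR j i : (j.+1 < i)%N -> (i < l)%N -> (Yv j)^T *m A *m Rk i = 0.
Proof.
elim: j i => [|j IH] i ji il; first exact: (RAR_far sA pA hS).
rewrite YvS linearB /= !mulmxBl (RAR_far sA pA hS) // !trmx_mul -!mulmxA.
by rewrite [(Yv j)^T *m (A *m _)]mulmxA IH ?mulmx0 ?subrr // ltnW.
Qed.

Lemma Y_QR j : (j.+1 < l)%N ->
  (Yv j)^T *m Q *m Rk j.+1 = - (Pi j *m invmx (S j) *m S j.+1).
Proof.
move=> jl; rewrite mulmxBr mulmxBl mul_mx_scalar -scalemxAl Y_R // scaler0 subr0.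
case: j jl => [|j] jl; first exact: (RAR_next sA pA hS).
rewrite YvS linearB /= !mulmxBl (RAR_next sA pA hS) // !trmx_mul -!mulmxA.
by rewrite [(Yv j)^T *m (A *m _)]mulmxA Y_AR ?mulmx0 ?subr0.
Qed.

Lemma RY j : (j < l)%N -> (Rk j)^T *m Yv j = S j.
Proof.
case: j => [//|j] jl; rewrite YvS mulmxBr.
have h0 : (Rk j.+1)^T *m Yv j = 0.
  by rewrite -[LHS]trmxK trmx_mul trmxK Y_R ?trmx0.
by rewrite !mulmxA h0 !mul0mx subr0.
Qed.

Lemma Z_spd j : (j < l)%N -> spd (Zm j).
Proof.
move=> jl; apply: spd_congr => // v h; apply: (unit_inj (S_unit hS jl)).
by rewrite -(RY jl) -mulmxA h mulmx0.
Qed.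

Lemma Z_sym j : (Zm j)^T = Zm j.
Proof. by rewrite /Zm !trmx_mul trmxK Q_sym mulmxA. Qed.

Lemma zstep_gen (Qm : 'M[R]_n) (Y R' : 'M[R]_(n, m)) : Qm^T = Qm ->
  (Y^T *m Qm *m Y) \in unitmx ->
  (R' - Y *m invmx (Y^T *m Qm *m Y) *m (Y^T *m Qm *m R'))^T *m Qm *m
    (R' - Y *m invmx (Y^T *m Qm *m Y) *m (Y^T *m Qm *m R')) =
  R'^T *m Qm *m R' - (Y^T *m Qm *m R')^T *m invmx (Y^T *m Qm *m Y) *m (Y^T *m Qm *m R').
Proof.
move=> sQ uZ.
have sZ : (Y^T *m Qm *m Y)^T = Y^T *m Qm *m Y by rewrite !trmx_mul trmxK sQ mulmxA.
have trN : (Y^T *m Qm *m R')^T = R'^T *m Qm *m Y by rewrite !trmx_mul trmxK sQ mulmxA.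
move: uZ sZ; set Z := Y^T *m Qm *m Y => uZ sZ.
have -> : (R' - Y *m invmx Z *m (Y^T *m Qm *m R'))^T = R'^T - R'^T *m Qm *m Y *m invmx Z *m Y^T.
  by rewrite linearB /= trmx_mul trN trmx_mul trmx_inv sZ !mulmxA.
rewrite trN.
have h1 (X : 'M[R]_m) : X *m Y^T *m Qm *m Y *m invmx Z = X.
  have -> : X *m Y^T *m Qm *m Y = X *m Z by rewrite /Z !mulmxA.
  by rewrite mulmxK.
rewrite !mulmxBl !mulmxBr !mulmxA h1.
move: (R'^T *m Qm *m R') (R'^T *m Qm *m Y *m invmx Z *m Y^T *m Qm *m R') => a b.
by apply/matrixP => i j; rewrite !mxE; ring.
Qed.

Lemma Z_step j : (j.+1 < l)%N ->
  Zm j.+1 = (Rk j.+1)^T *m Q *m Rk j.+1 -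
    ((Yv j)^T *m Q *m Rk j.+1)^T *m invmx (Zm j) *m ((Yv j)^T *m Q *m Rk j.+1).
Proof.
move=> jl; rewrite /Zm YvS /Zm zstep_gen //; first exact: Q_sym.
by apply: spd_unit; apply: Z_spd; apply: ltn_trans jl.
Qed.

Hypothesis mu0 : 0 < mu.

Lemma RQR k : (Rk k)^T *m Q *m Rk k = (Rk k)^T *m A *m Rk k - mu *: S k.
Proof. by rewrite mulmxBr mulmxBl mul_mx_scalar -scalemxAl. Qed.

Lemma Pi_sym' k : (Pi k)^T = Pi k.
Proof. exact: Pi_sym. Qed.

Lemma inv_step j : (j < l)%N ->
  spd (Pi j - Zm j) /\
  Theta_mu A B X0 mu j = S j *m invmx (Pi j - Zm j) *m S j.
Proof.
elim: j => [l0|j IH jl].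
  have e : Pi 0 - Zm 0 = mu *: S 0.
    by rewrite /Zm /= bcgP0 RQR opprB addrC subrK.
  rewrite e; split; first by apply: spd_scale => //; apply: hS.
  have uS := S_unit hS l0.
  rewrite invmxZ; last by rewrite unitmxZ // unitfE gt_eqF.
  rewrite /Theta_mu /= mul_mx_scalar -scalemxAr -scalemxAl mulmxV // mul1mx.
  by [].
have jl' : (j < l)%N by apply: ltn_trans jl.
have [hK hT] := IH jl'.
have hZ := Z_spd jl'.
have O := Orth_all sA pA hS jl'.
have uP := Pi_unit pA hS jl' O.
have uS := S_unit hS jl'.
have sS := S_sym A B X0 j; have sS' := S_sym A B X0 j.+1.
have hS' := hS jl.
set K := Pi j - Zm j in hK hT.
set M := K + K *m invmx (Zm j) *m K.
have hM : spd M by apply: spd_M.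
have eD : Theta_mu A B X0 mu j - Theta A B X0 j = S j *m invmx M *m S j.
  rewrite hT ThetaE /K dform //; [exact: spd_unit | exact: spd_unit].
have hD : spd (Theta_mu A B X0 mu j - Theta A B X0 j).
  rewrite eD -{1}sS; apply: spd_congr; first exact: spd_inv.
  by move=> v; apply: unit_inj.
have eTm : Theta_mu A B X0 mu j.+1 =
   S j.+1 *m (invmx (mu *: (Theta_mu A B X0 mu j - Theta A B X0 j) + S j.+1) *m
     (Theta_mu A B X0 mu j - Theta A B X0 j)) by [].
rewrite eTm theta_step // eD (inv_sandwich (spd_unit hM) uS).
have eK' : Pi j.+1 - Zm j.+1 =
    mu *: S j.+1 + S j.+1 *m (invmx (S j) *m M *m invmx (S j)) *m S j.+1.
  have sP := Pi_sym' j; have uZ := spd_unit hZ.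
  rewrite /M /K -(zk mu sP sS sS' uZ uS).
  rewrite Z_step // Y_QR // RQR (RAR_diag sA pA hS) //.
  move: (Pi j.+1) ((Xi j)^T *m Pi j *m Xi j)
    ((- (Pi j *m invmx (S j) *m S j.+1))^T *m invmx (Zm j) *m
       (- (Pi j *m invmx (S j) *m S j.+1))) (mu *: S j.+1) => a b c d.
  by apply/matrixP => i k; rewrite !mxE; ring.
rewrite eK'; split => //.
apply: spd_add_psd; first exact: spd_scale.
rewrite -{1}sS'; apply: psd_congr; apply: spd_psd.
rewrite -(inv_sandwich (spd_unit hM) uS); apply: spd_inv.
by rewrite -eD.
Qed.

Lemma D_spd j : (j < l)%N -> spd (Theta_mu A B X0 mu j - Theta A B X0 j).
Proof.
move=> jl; have [hK hT] := inv_step jl.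
have hZ := Z_spd jl.
have O := Orth_all sA pA hS jl.
have uP := Pi_unit pA hS jl O.
have uS := S_unit hS jl.
have sS := S_sym A B X0 j.
rewrite hT ThetaE dform //; try exact: spd_unit.
rewrite -{1}sS; apply: spd_congr; first by apply/spd_inv/spd_M.
by move=> v; apply: unit_inj.
Qed.

End Main.

Unset Implicit Arguments.

Theorem theorem7 (R : realType) (n m : nat) (A : 'M[R]_n) (B X0 : 'M[R]_(n, m))
    (mu : R) (l : nat) :
  spd A ->
  0 < mu -> lt_lambda_min mu A ->
  (1 <= l)%N ->
  (forall j, (j < l)%N -> \rank (bcgR A B X0 j) = m) ->
  (* well-definedness: the matrices inverted in Upsilon^(mu)_j are invertible *)
  (forall j, (1 <= j <= l)%N -> Mmu A B X0 mu j \in unitmx) /\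
  (* decomposition *)
  (forall k, (1 <= k <= l)%N ->
     Theta_mu A B X0 mu k.-1 - Err A B X0 k.-1 =
     \sum_(k <= j < l.+1) Bmu A B X0 mu j
       + (Theta_mu A B X0 mu l - Err A B X0 l)) /\
  (forall j, (1 <= j <= l)%N -> spd (Bmu A B X0 mu j)) /\
  (bcgR A B X0 l = 0 ->
   forall k, (1 <= k <= l)%N -> spd (Theta_mu A B X0 mu k.-1 - Err A B X0 k.-1)).
Proof.
move=> pA mu0 hlam l1 hrank.
have sA : A^T = A by case: pA.
have uA := spd_unit pA.
have pQ := lambda_spd pA hlam.
have hS : forall i, (i < l)%N -> spd (RtR A B X0 i).
  move=> i il; apply: spd_gram => v hv.
  have rf : row_free (bcgR A B X0 i)^T by rewrite /row_free mxrank_tr hrank.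
  apply: trmx_inj; rewrite trmx0; apply/eqP.
  by rewrite -(mulmx_free_eq0 _ rf) -trmx_mul hv trmx0.
have hD := D_spd sA pA hS pQ mu0.
have hB : forall j, (1 <= j <= l)%N -> spd (Bmu A B X0 mu j).
  case=> [//|j] /andP[_ jl].
  exact: (bmu_spd mu0 (hD j jl) (psd_gram _)).
have hstep : forall k, (1 <= k <= l)%N ->
    Theta_mu A B X0 mu k.-1 - Err A B X0 k.-1 =
    Bmu A B X0 mu k + (Theta_mu A B X0 mu k - Err A B X0 k).
  case=> [//|k] /andP[_ kl] /=.
  have e := Err_step sA pA hS uA kl.
  rewrite /Bmu /= -e.
  move: (Theta_mu A B X0 mu k) (Theta_mu A B X0 mu k.+1) (Err A B X0 k) (Err A B X0 k.+1) => a b c d.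
  by apply/matrixP => i j; rewrite !mxE; ring.
split.
  move=> [|j] /andP[]; first by [].
  move=> _ jl; apply: spd_unit; rewrite /Mmu /=.
  apply: spd_add_psd; [exact: (spd_scale mu0 (hD j jl)) | exact: psd_gram].
split.
  move=> k /andP[k1 kl].
  have [d ed] : exists d, l = (k + d)%N by exists (l - k)%N; rewrite subnKC.
  elim: d k k1 kl ed => [|d IH] k k1 kl ed.
    rewrite addn0 in ed; subst k.
    by rewrite big_nat1 (hstep l) // l1 leqnn.
  have kl' : (k < l)%N by rewrite ed -addSnnS leq_addr.
  rewrite big_ltn ?ltnS // (hstep k) ?k1 // -[RHS]addrA; congr (_ + _).
  by apply: (IH k.+1) => //; rewrite ed addSnnS.
split=> //.
move=> Rl0.
have T0 : Theta_mu A B X0 mu l = 0 by rewrite /Theta_mu /RtR Rl0 mulmx0 mul0mx.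
have E0 : Err A B X0 l = 0 by rewrite (Err_res B X0 sA uA) Rl0 mulmx0.
move=> k /andP[k1 kl].
have [d ed] : exists d, l = (k + d)%N by exists (l - k)%N; rewrite subnKC.
elim: d k k1 kl ed => [|d IH] k k1 kl ed.
  rewrite addn0 in ed; subst k.
  by rewrite (hstep l) ?l1 ?leqnn // T0 E0 subrr addr0; apply: hB; rewrite l1 leqnn.
have kl' : (k < l)%N by rewrite ed -addSnnS leq_addr.
rewrite (hstep k) ?k1 //; apply: spd_add_psd; first by apply: hB; rewrite k1.
by apply: spd_psd; apply: (IH k.+1) => //; rewrite ed addSnnS.
Qed.
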